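(* Let $X$ be a $k$-regular bipartite graph on $n$ vertices with both parts of size $n/2$, let $\lambda_2$ be the second largest eigenvalue of its adjacency matrix, and suppose every pair of distinct vertices of $X$ has at most $q$ common neighbours. Then $\mathrm{motion}(X)\geq\frac{k-|\lambda_2|-q}{2k}\,n$.
   Context: The motion $\mathrm{motion}(X)$ of a graph is the minimum, over non-identity automorphisms $\sigma$ of $X$, of the number of vertices not fixed by $\sigma$ (taken to be $+\infty$ if the automorphism group is trivial). *)

(* Defs.v *)
From HB Require Import structures.
From mathcomp Require Import all_boot all_order all_fingroup all_algebra all_field.
Set Implicit Arguments. Unset Strict Implicit. Unset Printing Implicit Defensive.
Import Order.TTheory GRing.Theory Num.Theory.

Definition simple_graph (T : finType) (e : rel T) : Prop :=
  irreflexive e /\ symmetric e.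

Definition k_regular (T : finType) (e : rel T) (k : nat) : Prop :=
  forall x : T, #|[set y | e x y]| = k.

Definition balanced_bipartite (T : finType) (e : rel T) : Prop :=
  exists A : {set T}, (#|A| * 2)%N = #|T| /\
    forall x y, e x y -> (x \in A) != (y \in A).

Definition common_nbrs_le (T : finType) (e : rel T) (q : nat) : Prop :=
  forall x y : T, x != y -> #|[set z | e x z && e y z]| <= q.

Definition is_aut (T : finType) (e : rel T) (s : {perm T}) : bool :=
  [forall x, forall y, e (s x) (s y) == e x y].

Definition moved (T : finType) (s : {perm T}) : nat := #|[set x | s x != x]|.

(* motion: None encodes +infinity (trivial automorphism group) *)
Definition motion (T : finType) (e : rel T) : option nat :=
  let A := [set s : {perm T} | is_aut e s & s != 1%g] in
  if A == set0 then None
  else Some (\big[minn/#|T|]_(s in A) moved s).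

Definition le_ext (r : algC) (m : option nat) : bool :=
  if m is Some k then (r <= k%:R)%R else true.

Definition adjmx (T : finType) (e : rel T) : 'M[algC]_#|T| :=
  \matrix_(i, j) ((e (enum_val i) (enum_val j))%:R)%R.

(* the eigenvalues, listed with multiplicity, in non-increasing order;
   eigs is the multiset of roots of the characteristic polynomial *)
Definition sorted_desc (s : seq algC) : seq algC := sort (fun x y => (y <= x)%R) s.

(* Main.v *)
Require Import Defs.
From HB Require Import structures.
From mathcomp Require Import all_boot all_order all_fingroup all_algebra all_field.
From mathcomp Require Import sesquilinear spectral ring.
Import Order.TTheory GRing.Theory Num.Theory.
Local Open Scope ring_scope.
Local Open Scope sesquilinear_scope.

Lemma sort_count (eigs : seq algC) : all (fun x => x \is Num.real) eigs ->
  leq (count (fun x : algC => nth 0%R (sorted_desc eigs) 1 < x) eigs) 1.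
Proof.
move=> Hr.
rewrite -((seq.permP (permEl (perm_sort (fun x y : algC => y <= x) eigs))) _) -/(sorted_desc eigs).
have Hrs : all (fun x => x \is Num.real) (sorted_desc eigs).
  by apply/allP => x; rewrite mem_sort => /(allP Hr).
have Hso : sorted (fun x y : algC => y <= x) (sorted_desc eigs).
  apply: (@sort_sorted_in _ (fun x : algC => x \is Num.real)) => //.
  by move=> x y xr yr; rewrite real_leVge.
move: Hrs Hso; case: (sorted_desc eigs) => [|x0 [|x1 rest]] //= Hrs Hso.
  by case: (0 < x0).
have := @order_path_min_in _ (fun x : algC => x \is Num.real) (fun x y : algC => y <= x) x1 rest.
case/andP: Hso => _ Hp.
have Hrs' : all (fun x : algC => x \is Num.real) (x1 :: rest) by case/andP: Hrs.
have Htr : {in (fun x : algC => x \is Num.real) & &, transitive (fun x y : algC => y <= x)}.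
  move=> x y z xr yr zr /= yx zy; exact: le_trans zy yx.
move=> /(_ Htr Hrs' Hp) Hall.
have -> : count [eta > x1] rest = 0%N.
  apply/eqP; rewrite -leqn0 leqNgt -has_count; apply/hasPn => y /(allP Hall) /=.
  by move=> H; apply/negP => H2; move: (lt_le_trans H2 H); rewrite ltxx.
by rewrite ltxx addn0; case: (x1 < x0).
Qed.

Lemma char_poly_conj n (P D : 'M[algC]_n) : P \in unitmx ->
  char_poly (invmx P *m D *m P) = char_poly D.
Proof.
move=> Pu.
have H1 : map_mx polyC (invmx P) *m map_mx polyC P = 1%:M.
  by rewrite -map_mxM mulVmx // map_mx1.
rewrite /char_poly.
have -> : char_poly_mx (invmx P *m D *m P) =
   map_mx polyC (invmx P) *m char_poly_mx D *m map_mx polyC P.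
  rewrite /char_poly_mx mulmxBr mulmxBl !map_mxM; congr (_ - _).
  by rewrite scalar_mxC -mulmxA H1 mulmx1.
rewrite !det_mulmx mulrC mulrA -det_mulmx.
by rewrite -map_mxM mulmxV // map_mx1 det1 mul1r.
Qed.

Lemma adj_spectral (T : finType) (e : rel T) : symmetric e ->
  exists P : 'M[algC]_#|T|, exists d : 'rV[algC]_#|T|,
   [/\ P \is unitarymx, d \is a realmx & adjmx e = P^t* *m diag_mx d *m P].
Proof.
move=> esym.
have Hs : adjmx e \is symmetricmx.
  apply/is_hermitianmxP; rewrite expr0 scale1r.
  by apply/matrixP => i j; rewrite !mxE esym.
have Hr : adjmx e \is a realmx by apply/mxOverP => i j; rewrite mxE realn.
have Hh := realsym_hermsym Hs Hr.
have /orthomx_spectralP HA := hermitian_normalmx Hh.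
exists (spectralmx (adjmx e)), (spectral_diag (adjmx e)); split.
- exact: spectral_unitarymx.
- exact: hermitian_spectral_diag_real.
- by rewrite {1}HA invmx_unitary // spectral_unitarymx.
Qed.

Lemma dotE n (x y : 'rV[algC]_n) : (x *m y^t*) 0 0 = \sum_i x 0 i * (y 0 i)^*.
Proof. by rewrite !mxE; apply: eq_bigr => i _; rewrite !mxE. Qed.

Lemma unitaryVK n (P : 'M[algC]_n) : P \is unitarymx -> P^t* *m P = 1%:M.
Proof. by move=> Pu; rewrite -invmx_unitary // mulVmx // unitarymx_unit. Qed.

Lemma unitaryKV n (P : 'M[algC]_n) : P \is unitarymx -> P *m P^t* = 1%:M.
Proof. by move=> /unitarymxP. Qed.

Lemma unit_dot n (P : 'M[algC]_n) (x y : 'rV[algC]_n) : P \is unitarymx ->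
  (x *m P^t*) *m (y *m P^t*)^t* = x *m y^t*.
Proof.
move=> Pu; rewrite trmx_mul map_mxM trmxCK mulmxA -(mulmxA x) unitaryVK //.
by rewrite mulmx1.
Qed.

Lemma core n (P : 'M[algC]_n) (d : 'rV[algC]_n) (u v : 'rV[algC]_n) (k lam : algC) :
  P \is unitarymx -> d \is a realmx -> u != 0 ->
  u *m (P^t* *m diag_mx d *m P) = k *: u ->
  lam \is Num.real -> lam < k ->
  leq #|[pred i : 'I_n | lam < d 0 i]| 1 ->
  (v *m (P^t* *m diag_mx d *m P) *m v^t*) 0 0 * (u *m u^t*) 0 0 <=
    k * `|(v *m u^t*) 0 0| ^+ 2 +
    lam * ((v *m v^t*) 0 0 * (u *m u^t*) 0 0 - `|(v *m u^t*) 0 0| ^+ 2).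
Proof.
move=> Pu dr u0 Hu lamr lamk Hc.
set w := v *m P^t*; set z := u *m P^t*.
have HQ : v *m (P^t* *m diag_mx d *m P) *m v^t* = (w *m diag_mx d) *m w^t*.
  by rewrite /w trmx_mul map_mxM trmxCK !mulmxA.
have Hz : z *m diag_mx d = k *: z.
  have := congr1 (fun M => M *m P^t*) Hu => /=.
  by rewrite !mulmxA -!(mulmxA _ P) unitaryKV // mulmx1 -scalemxAl.
have Hzi i : z 0 i * d 0 i = k * z 0 i.
  by have /rowP /(_ i) := Hz; rewrite mul_mx_diag !mxE.
rewrite HQ -(@unit_dot _ P v u Pu) -(@unit_dot _ P v v Pu) -(@unit_dot _ P u u Pu) -/w -/z.
rewrite !dotE.
have [i0 Hi0] : exists i0, z 0 i0 != 0.
  case: (pickP (fun i => z 0 i != 0)) => [i0 H|H]; first by exists i0.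
  have z0 : z = 0 by apply/rowP => i; move: (H i) => /negbFE/eqP ->; rewrite mxE.
  move: u0; have -> : u = z *m P by rewrite /z -mulmxA unitaryVK // mulmx1.
  by rewrite z0 mul0mx eqxx.
have dk : d 0 i0 = k.
  by apply: (mulfI Hi0); rewrite Hzi mulrC.
have Hother i : i != i0 -> ~~ (lam < d 0 i).
  move=> Hne; apply/negP => Hl; have := (card_le1_eqP Hc) i i0.
  rewrite !inE /= Hl dk lamk => /(_ isT isT) Heq; by rewrite Heq eqxx in Hne.
have Hdle i : i != i0 -> d 0 i <= lam.
  move=> /Hother; have dri : d 0 i \is Num.real by move/mxOverP: dr; apply.
  by rewrite real_ltNge // negbK.
have Hz0 i : i != i0 -> z 0 i = 0.
  move=> Hne; apply/eqP; apply: contraR (Hother i Hne) => Hn.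
  by rewrite (mulfI Hn (etrans (Hzi i) (mulrC _ _))) lamk.
have -> : \sum_i z 0 i * (z 0 i)^* = z 0 i0 * (z 0 i0)^*.
  rewrite (bigD1 i0) //= big1 ?addr0 // => i /Hz0 ->; by rewrite mul0r.
have -> : \sum_i w 0 i * (z 0 i)^* = w 0 i0 * (z 0 i0)^*.
  rewrite (bigD1 i0) //= big1 ?addr0 // => i /Hz0 ->; by rewrite conjC0 mulr0.
rewrite [\sum_i w 0 i * (w 0 i)^*](bigD1 i0) //=.
rewrite [\sum_i (w *m diag_mx d) 0 i * _](bigD1 i0) //=.
set R := \sum_(i | i != i0) (w *m diag_mx d) 0 i * _.
set R' := \sum_(i | i != i0) w 0 i * _.
have HR : R <= lam * R'.
  rewrite /R /R' mulr_sumr; apply: ler_sum => i Hi.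
  rewrite mul_mx_diag mxE -mulrA mulrC [lam * _]mulrC.
  rewrite -mulrA [(w 0 i)^* * _]mulrC [X in _ <= X]mulrC.
  by apply: ler_wpM2r; [exact: mul_conjC_ge0 | exact: Hdle].
rewrite mul_mx_diag mxE dk.
set a := w 0 i0; set b := z 0 i0.
rewrite normCK rmorphM /= conjCK.
have b0 : 0 <= b * b^* by exact: mul_conjC_ge0.
have E1 : (a * k * a^* + R) * (b * b^*) = k * (a * b^* * (a^* * b)) + R * (b * b^*).
  by ring.
have E2 : lam * ((a * a^* + R') * (b * b^*) - a * b^* * (a^* * b)) = (lam * R') * (b * b^*).
  by ring.
rewrite E1 E2 lerD2l; exact: ler_wpM2r.
Qed.

Lemma arith (k q m n : nat) (Q lam : algC) : lam \is Num.real ->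
  (0 < m)%N -> (m <= n)%N ->
  (m * k)%:R <= Q + (m * q)%:R ->
  (lam < k%:R -> Q * n%:R <= k%:R * (m%:R * m%:R) + lam * (m%:R * n%:R - m%:R * m%:R)) ->
  (k%:R - `|lam| - q%:R) / (2 * k)%:R * n%:R <= m%:R.
Proof.
move=> lamr m0 mn H1 H2'.
set c := k%:R - `|lam| - q%:R.
have cr : c \is Num.real by rewrite /c !rpredB ?realn ?normr_real.
have [c0|c0] := real_leP cr (real0 _).
  apply: (@le_trans _ _ 0); last exact: ler0n.
  rewrite mulr_le0_ge0 ?ler0n // mulr_le0_ge0 // invr_ge0 ler0n //.
have H2 : Q * n%:R <= k%:R * (m%:R * m%:R) + lam * (m%:R * n%:R - m%:R * m%:R).
  apply: H2'; apply: (le_lt_trans (real_ler_norm lamr)).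
  move: c0; rewrite /c subr_gt0 => H; rewrite -subr_gt0.
  exact: le_lt_trans (ler0n _ q) H.
have mnr : 0 <= m%:R * n%:R - m%:R * m%:R :> algC.
  by rewrite subr_ge0 -!natrM ler_nat leq_mul2l mn orbT.
have H3 : lam * (m%:R * n%:R - m%:R * m%:R) <= `|lam| * (m%:R * n%:R).
  apply: (le_trans (ler_wpM2r mnr (real_ler_norm lamr))).
  by apply: ler_wpM2l; [exact: normr_ge0 | rewrite lerBlDr lerDl -natrM ler0n].
have H4 : (m * k)%:R * n%:R <= k%:R * (m%:R * m%:R) + `|lam| * (m%:R * n%:R) + (m * q)%:R * n%:R.
  apply: (le_trans (ler_wpM2r (ler0n _ n) H1)).
  rewrite mulrDl lerD2r; apply: (le_trans H2); by rewrite lerD2l.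
have H5 : m%:R * (c * n%:R) <= m%:R * (k%:R * m%:R) :> algC.
  have -> : m%:R * (c * n%:R) = (m * k)%:R * n%:R - (`|lam| * (m%:R * n%:R) + (m * q)%:R * n%:R).
    by rewrite /c !natrM; ring.
  by rewrite lerBlDr addrA mulrA [X in X * m%:R]mulrC -mulrA.
rewrite ler_pM2l ?ltr0n // in H5.
have k0 : (0 < k)%N.
  rewrite lt0n; apply/negP => /eqP k0; move: c0; rewrite /c k0 sub0r.
  rewrite -opprD oppr_gt0 => H; have := addr_ge0 (normr_ge0 lam) (ler0n _ q).
  by rewrite (lt_geF H).
rewrite mulrAC ler_pdivrMr ?ltr0n ?muln_gt0 //.
apply: (le_trans H5); rewrite natrM mulrC mulrA ler_wpM2r ?ler0n //.
by rewrite ler_peMr ?ler0n // ler1n.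
Qed.
Lemma sum_bool (T : finType) (F : pred T) :
  \sum_x ((F x : nat)%:R : algC) = #|[set x | F x]|%:R.
Proof.
rewrite -natr_sum; congr (_%:R).
rewrite cardsE -sum1_card [RHS]big_mkcond; apply: eq_bigr => x _. by rewrite unfold_in; case: (F x).
Qed.

Lemma sum_bool_nat (T : finType) (F : pred T) :
  (\sum_x (F x : nat) = #|[set x | F x]|)%N.
Proof.
rewrite cardsE -sum1_card [RHS]big_mkcond; apply: eq_bigr => x _.
by rewrite unfold_in; case: (F x).
Qed.

Lemma sumT (T : finType) (F : T -> algC) :
  \sum_(i < #|T|) F (enum_val i) = \sum_x F x.
Proof. by rewrite (big_enum_val F). Qed.

Lemma card_count n (P : pred 'I_n) : #|P| = count P (enum 'I_n).
Proof.
rewrite cardE /enum_mem size_filter /enum_mem (@eq_filter _ _ predT) ?filter_predT //.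
Qed.

Lemma deg_bound (T : finType) (e : rel T) k q (s : {perm T}) :
  k_regular e k -> common_nbrs_le e q -> is_aut e s ->
  forall x, s x != x -> (k <= #|[set y | e x y & s y != y]| + q)%N.
Proof.
move=> reg cn aut x Hx.
rewrite -(reg x) -(cardsID [set y | s y != y]); apply: leq_add.
  by apply: subset_leq_card; apply/subsetP => y; rewrite !inE.
apply: leq_trans (cn x (s x) _); last by rewrite eq_sym.
apply: subset_leq_card; apply/subsetP => y; rewrite !inE negbK => /andP[/eqP sy exy].
rewrite exy /=; move/forallP: aut => /(_ x) /forallP /(_ y) /eqP.
by rewrite sy exy.
Qed.

Lemma main_bound (T : finType) (e : rel T) (k q : nat) (eigs : seq algC) (s : {perm T}) :
  symmetric e -> k_regular e k -> common_nbrs_le e q ->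
  char_poly (adjmx e) = \prod_(x <- eigs) ('X - x%:P) ->
  is_aut e s -> s != 1%g ->
  ((k%:R - `|nth 0%R (sorted_desc eigs) 1| - q%:R) / (2 * k)%:R) * #|T|%:R
    <= (moved s)%:R.
Proof.
move=> esym reg cn Hch aut s1.
have [P [d [Pu dr HA]]] := @adj_spectral _ _ esym.
have Hperm : perm_eq eigs [seq d 0 i | i <- enum 'I_#|T|].
  apply: prod_XsubC_eq; rewrite -Hch HA -invmx_unitary //.
  rewrite char_poly_conj ?unitarymx_unit // char_poly_trig ?diag_mx_is_trig //.
  rewrite big_map big_enum /=; apply: eq_bigr => i _; by rewrite mxE eqxx mulr1n.
have Hreal : all (fun x => x \is Num.real) eigs.
  apply/allP => x; rewrite (perm_mem Hperm) => /mapP [i _ ->].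
  by move/mxOverP: dr => /(_ 0 i).
set lam := nth 0 (sorted_desc eigs) 1.
have lamr : lam \is Num.real.
  rewrite /lam; case: (ltnP 1 (size (sorted_desc eigs))) => H.
    have := mem_nth 0 H; rewrite mem_sort; exact: (allP Hreal).
  by rewrite nth_default.
have Hcard : leq #|[pred i : 'I_#|T| | lam < d 0 i]| 1.
  rewrite card_count -(count_map (d 0) (fun x => lam < x)) -(seq.permP Hperm).
  exact: sort_count.
set S := [set x | s x != x].
have -> : moved s = #|S| by [].
have [x0 Hx0] : exists x0, s x0 != x0.
  apply/existsP; apply: contraR s1 => /existsPn H.
  apply/eqP/permP => x; rewrite perm1; apply/eqP; have := H x; by rewrite negbK.
have m0 : (0 < #|S|)%N by apply/card_gt0P; exists x0; rewrite inE.
have mn : (#|S| <= #|T|)%N by exact: max_card.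
pose v : 'rV[algC]_#|T| := \row_i ((enum_val i \in S) : nat)%:R.
pose u : 'rV[algC]_#|T| := const_mx 1.
have Eu : (u *m u^t*) 0 0 = #|T|%:R.
  rewrite dotE; under eq_bigr do rewrite !mxE conjC1 mulr1.
  by rewrite sumr_const card_ord.
have Evu : (v *m u^t*) 0 0 = #|S|%:R.
  rewrite dotE; under eq_bigr do rewrite !mxE conjC1 mulr1.
  rewrite (@sumT _ (fun x => ((x \in S) : nat)%:R)) sum_bool.
  by rewrite cardsE.
have Evv : (v *m v^t*) 0 0 = #|S|%:R.
  rewrite dotE; under eq_bigr do rewrite !mxE conjC_nat -natrM mulnb andbb.
  rewrite (@sumT _ (fun x => ((x \in S) : nat)%:R)) sum_bool.
  by rewrite cardsE.
have Hu : u *m adjmx e = k%:R *: u.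
  apply/rowP => j; rewrite !mxE mulr1.
  under eq_bigr do rewrite !mxE mul1r.
  rewrite (@sumT _ (fun x => (e x (enum_val j) : nat)%:R)) sum_bool -(reg (enum_val j)).
  suff -> : [set x | e x (enum_val j)] = [set y | e (enum_val j) y] by [].
  by apply/setP => x; rewrite !inE esym.
have u0 : u != 0.
  apply/eqP => /rowP /(_ (enum_rank x0)); rewrite !mxE => /eqP; by rewrite oner_eq0.
have EQ : (v *m adjmx e *m v^t*) 0 0 =
   (\sum_y \sum_x ((x \in S) * e x y * (y \in S))%N)%:R.
  rewrite dotE natr_sum -[RHS](@sumT T).
  apply: eq_bigr => j _; rewrite !mxE mulr_suml natr_sum -[RHS](@sumT T).
  by apply: eq_bigr => i _; rewrite !mxE conjC_nat -!natrM.
have Hn : (#|S| * k <= \sum_y \sum_x (x \in S) * e x y * (y \in S) + #|S| * q)%N.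
  rewrite exchange_big /=.
  apply: (@leq_trans (\sum_(x in S) (#|[set y | e x y & s y != y]| + q))).
    rewrite -sum_nat_const; apply: leq_sum => x; rewrite inE => Hx.
    exact: (@deg_bound T e k q s reg cn aut x Hx).
  rewrite big_split /= sum_nat_const leq_add2r big_mkcond /=.
  apply: leq_sum => x _; case: ifP => Hx //.
  rewrite (eq_bigr (fun y => (e x y && (s y != y) : nat))) ?sum_bool_nat //.
  by move=> y _; rewrite mul1n mulnb inE.
have H1 : (#|S| * k)%:R <= (v *m adjmx e *m v^t*) 0 0 + (#|S| * q)%:R.
  by rewrite EQ -natrD ler_nat.
apply: (@arith k q #|S| #|T| _ lam lamr m0 mn H1) => lamk.
have Hu' : u *m (P^t* *m diag_mx d *m P) = k%:R *: u by rewrite -HA.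
have := @core _ P d u v k%:R lam Pu dr u0 Hu' lamr lamk Hcard.
by rewrite -HA Eu Evu Evv normr_nat expr2.
Qed.

Theorem lemma5p1 (T : finType) (e : rel T) (k q : nat) (eigs : seq algC) :
  simple_graph e ->
  k_regular e k ->
  balanced_bipartite e ->
  common_nbrs_le e q ->
  char_poly (adjmx e) = \prod_(x <- eigs) ('X - x%:P) ->
  let n := #|T| in
  let lambda2 := nth 0%R (sorted_desc eigs) 1 in
  le_ext (((k%:R - `|lambda2| - q%:R) / (2 * k)%:R) * n%:R)%R (motion e).
Proof.
move=> [_ esym] reg _ cn Hch.
rewrite /= /le_ext /motion; case: ifP => // HA.
set lam := nth 0%R (sorted_desc eigs) 1; set n := #|T|.
have [s0 Hs0] : exists s0, s0 \in [set s : {perm T} | is_aut e s & s != 1%g].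
  by apply/set0Pn; rewrite HA.
have Hb s : s \in [set s : {perm T} | is_aut e s & s != 1%g] ->
    (k%:R - `|lam| - q%:R) / (2 * k)%:R * n%:R <= (moved s)%:R.
  rewrite inE => /andP [aut s1]; exact: (@main_bound T e k q eigs s esym reg cn Hch aut s1).
apply: (big_ind (fun m : nat => (k%:R - `|lam| - q%:R) / (2 * k)%:R * n%:R <= m%:R)).
- apply: (le_trans (Hb s0 Hs0)); rewrite ler_nat; exact: max_card.
- by move=> x y Hx Hy; rewrite /minn; case: ifP.
- exact: Hb.
Qed.
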